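(* Let $\mathbb{H}$ be the real quaternion algebra and let $p\in\mathbb{R}[x]$ be a nonconstant polynomial. Then every element of $\mathbb{H}$ can be expressed as a product $xy$ of two elements $x,y\in p[\mathbb{H},\mathbb{H}]=\{p(ab)-p(ba)\mid a,b\in\mathbb{H}\}$. *)

(* Defs.v *)
From mathcomp Require Import all_boot all_order all_algebra.
From mathcomp Require Import reals.
Set Implicit Arguments. Unset Strict Implicit. Unset Printing Implicit Defensive.
Import GRing.Theory Num.Theory.
Local Open Scope ring_scope.

Section Quat.
Variable R : realType.

(* q = q0 + q1 i + q2 j + q3 k *)
Record quat := Quat { q0 : R; q1 : R; q2 : R; q3 : R }.

Definition qzero : quat := Quat 0 0 0 0.
Definition qone : quat := Quat 1 0 0 0.
Definition qadd (x y : quat) : quat :=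
  Quat (q0 x + q0 y) (q1 x + q1 y) (q2 x + q2 y) (q3 x + q3 y).
Definition qopp (x : quat) : quat := Quat (- q0 x) (- q1 x) (- q2 x) (- q3 x).
Definition qsub (x y : quat) : quat := qadd x (qopp y).
Definition qscale (c : R) (x : quat) : quat :=
  Quat (c * q0 x) (c * q1 x) (c * q2 x) (c * q3 x).
(* Hamilton product, i^2 = j^2 = k^2 = ijk = -1 *)
Definition qmul (x y : quat) : quat :=
  Quat (q0 x * q0 y - q1 x * q1 y - q2 x * q2 y - q3 x * q3 y)
       (q0 x * q1 y + q1 x * q0 y + q2 x * q3 y - q3 x * q2 y)
       (q0 x * q2 y - q1 x * q3 y + q2 x * q0 y + q3 x * q1 y)
       (q0 x * q3 y + q1 x * q2 y - q2 x * q1 y + q3 x * q0 y).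
Fixpoint qpow (x : quat) (n : nat) : quat :=
  match n with 0 => qone | n'.+1 => qmul x (qpow x n') end.

Definition qeval (p : {poly R}) (x : quat) : quat :=
  foldr qadd qzero [seq qscale p`_i (qpow x i) | i <- iota 0 (size p)].

Definition in_pcomm (p : {poly R}) (x : quat) : Prop :=
  exists a b : quat, x = qsub (qeval p (qmul a b)) (qeval p (qmul b a)).
End Quat.

(* Main.v *)
Require Import Defs.
From mathcomp Require Import all_boot all_order all_algebra.
From mathcomp Require Import reals polyrcf ring zify.
Set Implicit Arguments. Unset Strict Implicit. Unset Printing Implicit Defensive.
Import GRing.Theory Num.Theory.
Local Open Scope ring_scope.

Section S.
Variable R : realType.

Fixpoint AB (s t m : R) (k : nat) : R * R :=
  match k with 0 => (1, 0) | k'.+1 => let (a, b) := AB s t m k' in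
     (s * a - m * t * b, t * a + s * b) end.

Definition mm (u1 u2 u3 : R) := u1 * u1 + u2 * u2 + u3 * u3.

Lemma qpow_line s t u1 u2 u3 k :
  qpow (Quat s (t*u1) (t*u2) (t*u3)) k =
  Quat (AB s t (mm u1 u2 u3) k).1 ((AB s t (mm u1 u2 u3) k).2 * u1)
       ((AB s t (mm u1 u2 u3) k).2 * u2) ((AB s t (mm u1 u2 u3) k).2 * u3).
Proof.
elim: k => [|k IH] /=; first by congr Quat; ring.
rewrite IH; case: (AB s t (mm u1 u2 u3) k) => a b /=.
rewrite /qmul /mm /=; congr Quat; ring.
Qed.

Lemma AB_neg s t m k : AB s (- t) m k = ((AB s t m k).1, - (AB s t m k).2).
Proof.
elim: k => [|k IH] /=; first by rewrite oppr0.
rewrite IH; case: (AB s t m k) => a b /=; congr pair; ring.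
Qed.

Lemma foldr_line (l : seq nat) (c a b : nat -> R) u1 u2 u3 :
  foldr (@qadd R) (qzero R) [seq qscale (c i) (Quat (a i) (b i * u1) (b i * u2) (b i * u3)) | i <- l]
  = Quat (\sum_(i <- l) c i * a i) ((\sum_(i <- l) c i * b i) * u1)
         ((\sum_(i <- l) c i * b i) * u2) ((\sum_(i <- l) c i * b i) * u3).
Proof.
elim: l => [|i l IH] /=; first by rewrite !big_nil /qzero; congr Quat; ring.
rewrite IH !big_cons /qadd /qscale /=; congr Quat; ring.
Qed.

Definition Bsum (p : {poly R}) s t m := \sum_(i < size p) p`_i * (AB s t m i).2.
Definition Asum (p : {poly R}) s t m := \sum_(i < size p) p`_i * (AB s t m i).1.

Lemma qeval_line p s t u1 u2 u3 :
  qeval p (Quat s (t*u1) (t*u2) (t*u3)) =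
  Quat (Asum p s t (mm u1 u2 u3)) (Bsum p s t (mm u1 u2 u3) * u1)
    (Bsum p s t (mm u1 u2 u3) * u2) (Bsum p s t (mm u1 u2 u3) * u3).
Proof.
rewrite /qeval.
under eq_map => i do rewrite qpow_line.
rewrite foldr_line /Asum /Bsum.
have E : forall F : nat -> R, \sum_(i <- iota 0 (size p)) F i = \sum_(i < size p) F i.
  by move=> F; rewrite -(big_mkord xpredT) /index_iota subn0.
by rewrite !E.
Qed.

Lemma key (p : {poly R}) (u1 u2 u3 s t : R) :
  (u1 != 0) || (u2 != 0) || (u3 != 0) ->
  2 * Bsum p s t (mm u1 u2 u3) = 1 -> in_pcomm p (Quat 0 u1 u2 u3).
Proof.
move=> nz hB.
set z := Quat s (t*u1) (t*u2) (t*u3).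
set z' := Quat s ((-t)*u1) ((-t)*u2) ((-t)*u3).
suff [a [b [h1 h2]]] : exists a b, qmul a b = z /\ qmul b a = z'.
  exists a, b; rewrite h1 h2 /z /z' !qeval_line /Asum /Bsum.
  under [X in qsub _ (Quat X _ _ _)]eq_bigr => i _ do rewrite AB_neg.
  under [X in qsub _ (Quat _ (X * _) _ _)]eq_bigr => i _ do rewrite AB_neg.
  under [X in qsub _ (Quat _ _ (X * _) _)]eq_bigr => i _ do rewrite AB_neg.
  under [X in qsub _ (Quat _ _ _ (X * _))]eq_bigr => i _ do rewrite AB_neg.
  rewrite /qsub /qadd /qopp /=.
  move: hB; rewrite /Bsum => hB.
  have -> : forall F : 'I_(size p) -> R, \sum_(i < size p) p`_i * - F i = - \sum_(i < size p) p`_i * F i.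
    by move=> F; rewrite -sumrN; apply: eq_bigr => i _; rewrite mulrN.
  set X := \sum_(i < size p) _ in hB *.
  congr Quat.
  - by rewrite subrr.
  - by rewrite -{1}(mul1r u1) -hB; ring.
  - by rewrite -{1}(mul1r u2) -hB; ring.
  - by rewrite -{1}(mul1r u3) -hB; ring.
have [h12|h12] := boolP ((u1 != 0) || (u2 != 0)).
  have hM : u1 * u1 + u2 * u2 != 0.
    by rewrite -!expr2 paddr_eq0 ?sqr_ge0 // !sqrf_eq0 negb_and.
  pose M := u1 * u1 + u2 * u2.
  pose a := Quat 0 u2 (- u1) 0.
  pose ai := Quat 0 (- u2 / M) (u1 / M) 0.
  exists a, (qmul ai z); rewrite /a /ai /z /z' /qmul /M /=; split; congr Quat; field; done.
move: h12; rewrite negb_or !negbK => /andP[/eqP e1 /eqP e2]; subst u1 u2.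
exists (Quat 0 1 0 0), (qmul (Quat 0 (-1) 0 0) z); rewrite /z /z' /qmul /=; split; congr Quat; ring.
Qed.

Fixpoint PAB (S T : {poly R}) (m : R) (k : nat) : {poly R} * {poly R} :=
  match k with 0 => (1, 0) | k'.+1 => let (a, b) := PAB S T m k' in
     (S * a - m%:P * T * b, T * a + S * b) end.

Lemma PAB_S S T m k : PAB S T m k.+1 =
  (S * (PAB S T m k).1 - m%:P * T * (PAB S T m k).2,
   T * (PAB S T m k).1 + S * (PAB S T m k).2).
Proof. by rewrite /=; case: (PAB S T m k). Qed.

Lemma PAB_eval S T m k x :
  ((PAB S T m k).1.[x], (PAB S T m k).2.[x]) = AB S.[x] T.[x] m k.
Proof.
elim: k => [|k IH] /=; first by rewrite hornerC horner0.
case: (PAB S T m k) IH => a b /=; case: (AB S.[x] T.[x] m k) => a' b' [<- <-].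
by rewrite !(hornerD, hornerN, hornerM, hornerC).
Qed.

Definition Gp (p : {poly R}) S T m :=
  2%:P * \sum_(i < size p) p`_i *: (PAB S T m i).2 - 1.

Lemma Gp_eval p S T m x :
  (Gp p S T m).[x] = 2 * Bsum p S.[x] T.[x] m - 1.
Proof.
rewrite /Gp /Bsum hornerD hornerN hornerCM horner_sum hornerC; congr (_ * _ - _).
apply: eq_bigr => i _; rewrite hornerZ; congr (_ * _).
by rewrite -PAB_eval.
Qed.

Lemma Gp_coef p S T m j :
  (Gp p S T m)`_j = 2 * \sum_(i < size p) p`_i * (PAB S T m i).2`_j - (j == 0)%:R.
Proof.
rewrite /Gp coefB coefCM coef_sum coefC; congr (_ * _ - _).
  by apply: eq_bigr => i _; rewrite coefZ.
by case: (j == 0).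
Qed.

Lemma coefA (m : R) k :
  [/\ (forall j, (k < j)%N -> (PAB 'X 1 m k).1`_j = 0), (PAB 'X 1 m k).1`_k = 1,
      (forall j, (k <= j)%N -> (PAB 'X 1 m k).2`_j = 0) & (PAB 'X 1 m k).2`_k.-1 = k%:R].
Proof.
elim: k => [|k [IH1 IH2 IH3 IH4]]; rewrite ?PAB_S /=.
  split; first by move=> [|j] //; rewrite coefC.
  - by rewrite coefC.
  - by move=> j _; rewrite coef0.
  by rewrite coef0.
move: IH1 IH2 IH3 IH4; set a := (PAB 'X 1 m k).1; set b := (PAB 'X 1 m k).2 => IH1 IH2 IH3 IH4.
rewrite mulr1.
split.
- move=> [|j] // hj; rewrite coefB coefXM coefCM /= IH1 // IH3 ?mulr0 ?subr0 //.
  lia.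
- by rewrite coefB coefXM coefCM /= IH2 IH3 // mulr0 subr0.
- move=> [|j] // hj; rewrite coefD coefXM mul1r /= IH1 // IH3 ?addr0 //.
- rewrite coefD coefXM mul1r IH2.
  clearbody a b; case: k {IH1 IH2 IH3} IH4 => [|k] /= IH4; first by rewrite addr0.
  by rewrite IH4 addrC natr1.
Qed.


Lemma coefBB (m : R) k : m != 0 ->
  [/\ (forall j, (k < j)%N -> (PAB 0 'X m k).1`_j = 0),
      (forall j, (k < j)%N -> (PAB 0 'X m k).2`_j = 0),
      (odd k -> (PAB 0 'X m k).2`_k != 0) &
      (~~ odd k -> (PAB 0 'X m k).1`_k != 0)].
Proof.
move=> hm; elim: k => [|k [IH1 IH2 IH3 IH4]]; rewrite ?PAB_S /=.
  split.
  - by move=> [|j] //; rewrite coefC.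
  - by move=> j _; rewrite coef0.
  - by [].
  - by rewrite coefC oner_neq0.
move: IH1 IH2 IH3 IH4; set a := (PAB 0 'X m k).1; set b := (PAB 0 'X m k).2 => IH1 IH2 IH3 IH4.
clearbody a b; rewrite !mul0r sub0r addr0 -mulrA.
split.
- by move=> [|j] // hj; rewrite coefN coefCM coefXM /= IH2 // mulr0 oppr0.
- by move=> [|j] // hj; rewrite coefXM /= IH1.
- by move=> hk; rewrite coefXM /= IH4 //; move: hk; rewrite /= negbK.
- move=> hk; rewrite coefN coefCM coefXM /= oppr_eq0 mulf_neq0 // IH3 //.
  by move: hk; rewrite /= negbK.
Qed.


Lemma size_from_coef (G : {poly R}) N :
  G`_N != 0 -> (forall j, (N < j)%N -> G`_j = 0) -> size G = N.+1.
Proof.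
move=> h1 h2; apply/eqP; rewrite eqn_leq; apply/andP; split.
  by apply/leq_sizeP.
rewrite ltnNge; apply/negP => /leq_sizeP h.
by move: h1; rewrite h ?eqxx.
Qed.

Lemma root_ex (p : {poly R}) m : m != 0 -> (1 < size p)%N ->
  exists s t, 2 * Bsum p s t m = 1.
Proof.
move=> hm hp.
have [n Hs] : exists n, size p = n.+1 by exists (size p).-1; rewrite prednK // ltnW.
have hl : p`_n != 0.
  have := lead_coef_eq0 p; rewrite /lead_coef Hs /= => ->.
  by apply/eqP => p0; move: hp; rewrite p0 size_poly0.
have [ho|ho] := boolP (odd (size p)).
  pose G := Gp p 'X 1 m.
  have n2 : (2 <= n)%N by move: ho hp; rewrite Hs /=; case: n {Hs hl} => [|[|n]].
  have hsz : size G = n.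
    rewrite -[n](@prednK n); last by lia.
    apply: size_from_coef.
      rewrite Gp_coef Hs big_ord_recr /= big1; last first.
        by move=> i _; case: (coefA m i) => _ _ h _; rewrite h ?mulr0 //; have := ltn_ord i; lia.
      case: (coefA m n) => _ _ _ ->.
      have -> : (n.-1 == 0)%N = false by apply/negP => /eqP; lia.
      rewrite subr0 add0r !mulf_neq0 //; first by rewrite pnatr_eq0.
      by rewrite pnatr_eq0; lia.
    move=> j hj; rewrite Gp_coef Hs big1; last first.
      by move=> i _; case: (coefA m i) => _ _ h _; rewrite h ?mulr0 //; have := ltn_ord i; lia.
    have -> : (j == 0)%N = false by apply/negP => /eqP; lia.
    by rewrite mulr0 subr0.
  have [x hx] : {x | root G x} by apply: odd_poly_root; rewrite hsz; move: ho; rewrite Hs.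
  exists x, 1; move: hx; rewrite /root Gp_eval hornerX hornerC subr_eq0 => /eqP //.
pose G := Gp p 0 'X m.
have n1 : odd n by move: ho; rewrite Hs /= negbK.
have hsz : size G = size p.
  rewrite Hs; apply: size_from_coef.
    rewrite Gp_coef Hs big_ord_recr /= big1; last first.
      by move=> i _; case: (coefBB i hm) => _ h _ _; rewrite h ?mulr0.
    case: (coefBB n hm) => _ _ h _.
    have -> : (n == 0)%N = false by apply/negP => /eqP n0; move: n1; rewrite n0.
    rewrite subr0 add0r !mulf_neq0 //; first by rewrite pnatr_eq0.
    exact: h.
  move=> j hj; rewrite Gp_coef Hs big1; last first.
    by move=> i _; case: (coefBB i hm) => _ h _ _; rewrite h ?mulr0 //; have := ltn_ord i; lia.
  have -> : (j == 0)%N = false by apply/negP => /eqP; lia.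
  by rewrite mulr0 subr0.
have [x hx] : {x | root G x} by apply: odd_poly_root; rewrite hsz.
exists 0, x; move: hx; rewrite /root Gp_eval hornerX hornerC subr_eq0 => /eqP //.
Qed.


Lemma pure_in (p : {poly R}) (hp : (1 < size p)%N) (u1 u2 u3 : R) :
  in_pcomm p (Quat 0 u1 u2 u3).
Proof.
have [nz|z] := boolP ((u1 != 0) || (u2 != 0) || (u3 != 0)).
  have hm : mm u1 u2 u3 != 0.
    by rewrite /mm -!expr2 !paddr_eq0 ?addr_ge0 ?sqr_ge0 // !sqrf_eq0 !negb_and.
  have [s [t h]] := root_ex hm hp.
  exact: key nz h.
move: z; rewrite !negb_or !negbK => /andP[/andP[/eqP -> /eqP ->] /eqP ->].
exists (qzero R), (qzero R); set X := qeval _ _.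
by rewrite /qsub /qadd /qopp /=; congr Quat; rewrite subrr.
Qed.

End S.

Theorem theorem2p14 (R : realType) (p : {poly R}) (hp : (1 < size p)%N)
  (q : quat R) :
  exists x y : quat R, in_pcomm p x /\ in_pcomm p y /\ q = qmul x y.
Proof.
case: q => a0 a1 a2 a3.
have [h|h] := boolP ((a1 != 0) || (a2 != 0)).
  have hM : a1 * a1 + a2 * a2 != 0.
    by rewrite -!expr2 paddr_eq0 ?sqr_ge0 // !sqrf_eq0 negb_and.
  pose M := a1 * a1 + a2 * a2.
  exists (Quat 0 (- a2) a1 0), (Quat 0 ((a0 * a2 - a1 * a3) / M) ((- a0 * a1 - a2 * a3) / M) 1).
  split; first exact: pure_in.
  split; first exact: pure_in.
  rewrite /qmul /M /=; congr Quat; field; done.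
move: h; rewrite negb_or !negbK => /andP[/eqP -> /eqP ->].
exists (Quat 0 1 0 0), (Quat 0 (- a0) a3 0).
split; first exact: pure_in.
split; first exact: pure_in.
rewrite /qmul /=; congr Quat; ring.
Qed.
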